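(* Let $\mu=(\mu_1,\mu_2,\dots,\mu_m)$ be a composition of $n$, let $\lambda\vdash n$ and let $T$ be a standard Young tableau of shape $\lambda$. The probability that a $\mu$ shuffle has RSK recording tableau $T$ equals $K_{\lambda\mu}\big/\binom{n}{\mu_1,\mu_2,\dots,\mu_m}$.
   Context: A $\mu$ shuffle of $n$ cards: break the deck into consecutive piles of sizes $\mu_1,\mu_2,\dots$ and choose uniformly at random one of the $\binom{n}{\mu_1,\mu_2,\dots}$ interleavings of the piles. Concretely, the resulting permutation $w$ is obtained from a uniformly random word with exactly $\mu_i$ occurrences of the letter $i$ by placing $1,\dots,\mu_1$ at the positions of the $1$'s left to right, the next $\mu_2$ integers at the positions of the $2$'s left to right, etc.; $w(p)$ is the integer at position $p$. The RSK recording tableau is obtained by row-inserting $w(1),\dots,w(n)$. $K_{\lambda\mu}$ (Kostka number) is the number of semistandard Young tableaux of shape $\lambda$ in which $i$ appears exactly $\mu_i$ times. *)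

(* Defs.v *)
From mathcomp Require Import all_boot all_order all_algebra.
Set Implicit Arguments. Unset Strict Implicit. Unset Printing Implicit Defensive.

Definition is_composition (n : nat) (mu : seq nat) : bool :=
  all (fun k => 0 < k) mu && (sumn mu == n).

Definition is_partition (n : nat) (la : seq nat) : bool :=
  sorted geq la && all (fun k => 0 < k) la && (sumn la == n).

(* Tableaux are lists of rows (English convention, row 0 on top). *)
Definition cols_strict (t : seq (seq nat)) : bool :=
  all (fun i => all (fun j => nth 0 (nth [::] t i) j < nth 0 (nth [::] t i.+1) j)
                    (iota 0 (size (nth [::] t i.+1))))
      (iota 0 (size t)).

Definition has_shape (la : seq nat) (t : seq (seq nat)) : bool :=
  map size t == la.

Definition is_syt (la : seq nat) (t : seq (seq nat)) : bool :=
  [&& has_shape la t, perm_eq (flatten t) (iota 1 (sumn la)),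
      all (sorted ltn) t & cols_strict t].

Definition is_ssyt (t : seq (seq nat)) : bool :=
  all (sorted leq) t && cols_strict t.

(* Words over the alphabet {0,...,m-1} (letter i here stands for letter i+1
   of the paper) with exactly mu_i occurrences of letter i. *)
Definition has_content (mu : seq nat) (w : seq 'I_(size mu)) : bool :=
  [forall i : 'I_(size mu), count_mem i w == nth 0 mu i].

(* Kostka number K_{la,mu}: number of SSYT of shape la and content mu.
   A filling of shape la is encoded by its reading row by row (reshape). *)
Definition Kostka (la mu : seq nat) : nat :=
  #|[set w : (sumn la).-tuple 'I_(size mu) |
      has_content w && is_ssyt (reshape la (map (@nat_of_ord _) w))]|.

Definition shuffle_perm (mu : seq nat) (w : seq nat) : seq nat :=
  mkseq (fun p => let a := nth 0 w p in
                  sumn (take a mu) + count_mem a (take p w) + 1) (size w).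

Fixpoint bump_row (r : seq nat) (x : nat) : option (nat * seq nat) :=
  match r with
  | [::] => None
  | y :: r' => if x < y then Some (y, x :: r')
               else match bump_row r' x with
                    | None => None
                    | Some (z, r'') => Some (z, y :: r'')
                    end
  end.

(* Insert x into tableau t; returns the new tableau and the index of the row
   in which the new box was created. *)
Fixpoint rs_insert (t : seq (seq nat)) (x : nat) : seq (seq nat) * nat :=
  match t with
  | [::] => ([:: [:: x]], 0)
  | r :: t' => match bump_row r x with
               | None => (rcons r x :: t', 0)
               | Some (y, r') => let: (t'', i) := rs_insert t' y in (r' :: t'', i.+1)
               end
  end.

Definition add_box (q : seq (seq nat)) (i k : nat) : seq (seq nat) :=
  if i < size q then set_nth [::] q i (rcons (nth [::] q i) k)
  else rcons q [:: k].

Fixpoint rsk_aux (P Q : seq (seq nat)) (k : nat) (w : seq nat)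
  : seq (seq nat) * seq (seq nat) :=
  match w with
  | [::] => (P, Q)
  | x :: w' => let: (P', i) := rs_insert P x in rsk_aux P' (add_box Q i k) k.+1 w'
  end.

Definition RSK_Q (w : seq nat) : seq (seq nat) := (rsk_aux [::] [::] 1 w).2.

(* Probability that a mu shuffle (uniform random word with content mu) has
   recording tableau T. *)
Definition shuffle_prob (mu : seq nat) (T : seq (seq nat)) : rat :=
  (#|[set w : (sumn mu).-tuple 'I_(size mu) |
        has_content w && (RSK_Q (shuffle_perm mu (map (@nat_of_ord _) w)) == T)]|%:R
   / #|[set w : (sumn mu).-tuple 'I_(size mu) | has_content w]|%:R)%R.

Definition multinomial (n : nat) (mu : seq nat) : rat :=
  ((n`!)%:R / \prod_(k <- mu) (k`!)%:R)%R.

(* Main.v *)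
Require Import Defs.
From mathcomp Require Import all_boot all_order all_algebra zify.
Set Implicit Arguments. Unset Strict Implicit. Unset Printing Implicit Defensive.

Fixpoint unbump (r : seq nat) (z : nat) : option (nat * seq nat) :=
  match r with
  | [::] => None
  | y :: r' => match unbump r' z with
               | Some (y', r'') => Some (y', y :: r'')
               | None => if y < z then Some (y, z :: r') else None
               end
  end.

Lemma bump_rowP r x :
  match bump_row r x with
  | None => all (fun u => u <= x) r
  | Some (y, r') => exists a b, [/\ r = a ++ y :: b, r' = a ++ x :: b,
                      all (fun u => u <= x) a & x < y]
  end.
Proof.
elim: r => [|u r IH] //=.
case: ltnP => [xu|ux]; first by exists [::], r.
move: IH; case: (bump_row r x) => [[y r']|] /=; last by move=> ->; rewrite ?ux ?andbT.
move=> [a [b [-> -> Ha Hy]]]; exists (u :: a), b; split => //=; by rewrite ?ux.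
Qed.

Lemma bump_cat a y b x : all (fun u => u <= x) a -> x < y ->
  bump_row (a ++ y :: b) x = Some (y, a ++ x :: b).
Proof.
elim: a => [|u a IH] /=; first by move=> _ ->.
by case/andP=> ux /IH H /H ->; rewrite ltnNge ux.
Qed.

Lemma bump_None r x : all (fun u => u <= x) r -> bump_row r x = None.
Proof. by elim: r => [|u r IH] //= /andP[ux /IH ->]; rewrite ltnNge ux. Qed.

Lemma unbumpP r z :
  match unbump r z with
  | None => all (fun u => z <= u) r
  | Some (y, r1) => exists a b, [/\ r = a ++ y :: b, r1 = a ++ z :: b,
                      all (fun u => z <= u) b & y < z]
  end.
Proof.
elim: r => [|u r IH] //=.
move: IH; case: (unbump r z) => [[y r']|] /=.
  by move=> [a [b [-> -> Hb Hy]]]; exists (u :: a), b.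
move=> Hr; case: ltnP => [uz|zu]; first by exists [::], r.
by rewrite ?zu.
Qed.

Lemma unbump_cat a y b z : y < z -> all (fun u => z <= u) b ->
  unbump (a ++ y :: b) z = Some (y, a ++ z :: b).
Proof.
move=> yz Hb; elim: a => [|u a IH] /=.
  have -> : unbump b z = None.
    elim: b Hb {yz} => [|v b IHb] //= /andP[zv /IHb ->]; by rewrite ltnNge zv.
  by rewrite yz.
by rewrite IH.
Qed.

Lemma pw_split a y b : pairwise leq (a ++ y :: b) ->
  [/\ all (fun u => u <= y) a, all (fun u => y <= u) b, pairwise leq a & pairwise leq b].
Proof.
rewrite pairwise_cat /= => /and3P[H1 H2 /andP[H3 H4]]; split => //.
by apply/allP=> u ua; move/allrelP: H1 => /(_ u y ua); rewrite inE eqxx => ->.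
Qed.

Lemma pw_join a y b : all (fun u => u <= y) a -> all (fun u => y <= u) b ->
  pairwise leq a -> pairwise leq b -> pairwise leq (a ++ y :: b).
Proof.
move=> Ha Hb pa pb; rewrite pairwise_cat /= pa pb Hb !andbT.
apply/allrelP=> u v ua; rewrite inE => /orP[/eqP ->|vb]; first by move/allP: Ha => /(_ u ua).
move/allP: Ha => /(_ u ua) uy; move/allP: Hb => /(_ v vb) yv; exact: leq_trans uy yv.
Qed.

Lemma bump_unbump r x y r' : pairwise leq r -> bump_row r x = Some (y, r') ->
  unbump r' y = Some (x, r).
Proof.
move=> pr; have := bump_rowP r x; case: (bump_row r x) => [[y0 r0]|] // [a [b [Er -> Ha xy]]] [<- <-].
rewrite Er in pr *; have [_ Hb _ _] := pw_split pr.
by rewrite unbump_cat.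
Qed.

Lemma unbump_bump r z y r1 : pairwise leq r -> unbump r z = Some (y, r1) ->
  bump_row r1 y = Some (z, r).
Proof.
move=> pr; have := unbumpP r z; case: (unbump r z) => [[y0 r0]|] // [a [b [Er -> Hb yz]]] [<- <-].
rewrite Er in pr *; have [Ha _ _ _] := pw_split pr.
by rewrite bump_cat.
Qed.

Definition cle (s : seq nat) v := count (fun u => u <= v) s.
Definition clt (s : seq nat) v := count (fun u => u < v) s.
Definition cs (r s : seq nat) := forall v, cle s v <= clt r v.

Lemma count_all (p : pred nat) s : (forall u, u \in s -> p u) -> count p s = size s.
Proof. by move=> H; apply/eqP; rewrite -all_count; apply/allP. Qed.
Lemma count_none (p : pred nat) s : (forall u, u \in s -> ~~ p u) -> count p s = 0.
Proof. by move=> H; apply/eqP; rewrite eqn0Ngt -has_count; apply/hasPn. Qed.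

Lemma cleE a y b v : cle (a ++ y :: b) v = cle a v + (y <= v) + cle b v.
Proof. by rewrite /cle count_cat /= addnA. Qed.
Lemma cltE a y b v : clt (a ++ y :: b) v = clt a v + (y < v) + clt b v.
Proof. by rewrite /clt count_cat /= addnA. Qed.

Ltac allin H := let u := fresh "u" in let hu := fresh "hu" in
  move=> u hu; move/allP: H => /(_ u hu); lia.

Definition insrow s x := if bump_row s x is Some (_, s') then s' else rcons s x.

Lemma cs_bump r s x y r' : pairwise leq r -> pairwise leq s -> cs r s ->
  bump_row r x = Some (y, r') -> cs r' (insrow s y).
Proof.
move=> pr ps H Hb v.
have := bump_rowP r x; rewrite Hb => -[a [b [Er Er' Ha xy]]].
rewrite Er in pr H; subst r'. have [_ Hbb _ _] := pw_split pr.
rewrite /insrow; have := bump_rowP s y; case: (bump_row s y) => [[z s']|].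
  move=> [c [d [Es -> Hc yz]]]. rewrite Es in ps H. have [_ Hd _ _] := pw_split ps.
  have Hv := H v; have Hy := H y; move: Hv Hy; rewrite !cleE !cltE.
  have e1 : cle d y = 0 by apply: count_none; allin Hd.
  have e2 : clt b y = 0 by apply: count_none; allin Hbb.
  have e3 : clt a y <= size a by apply: count_size.
  have e4 : cle c y = size c by apply: count_all; allin Hc.
  rewrite e1 e2 e4 ltnn; try (have -> : (z <= y) = false by lia).
  case: (ltnP v y) => vy.
    try (have -> : (y <= v) = false by lia). try (have -> : (y < v) = false by lia). lia.
  case: (leqP z v) => zv.
    try (have -> : (y <= v) by lia). try (have -> : (x < v) by lia). lia.
  have f1 : cle d v = 0 by apply: count_none; allin Hd.
  have f2 : cle c v = size c by apply: count_all; allin Hc.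
  have f3 : clt a v = size a by apply: count_all; allin Ha.
  rewrite f1 f2 f3; try (have -> : (y <= v) by lia). try (have -> : (x < v) by lia). lia.
move=> Hs.
have Hy := H y; have Hv := H v; move: Hv Hy; rewrite !cltE /cle -cats1 count_cat /= addn0.
have e2 : clt b y = 0 by apply: count_none; allin Hbb.
have e3 : clt a y <= size a by apply: count_size.
have e4 : count (fun u => u <= y) s = size s by apply: count_all; allin Hs.
rewrite e2 e4 ltnn.
case: (ltnP v y) => vy.
  try (have -> : (y <= v) = false by lia). try (have -> : (y < v) = false by lia). lia.
have f2 : count (fun u => u <= v) s = size s by apply: count_all; allin Hs.
have f3 : clt a v = size a by apply: count_all; allin Ha.
rewrite f2 f3; try (have -> : (y <= v) by lia). try (have -> : (x < v) by lia). lia.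
Qed.

Fixpoint tabinv (t : seq (seq nat)) : Prop :=
  if t is r :: t' then [/\ r != [::], pairwise leq r, cs r (head [::] t') & tabinv t']
  else True.

Lemma insE r t x : rs_insert (r :: t) x =
  match bump_row r x with
  | None => (rcons r x :: t, 0)
  | Some (y, r') => ((r' :: (rs_insert t y).1), (rs_insert t y).2.+1)
  end.
Proof. by rewrite /=; case: (bump_row r x) => [[y r']|] //; case: (rs_insert t y). Qed.

Lemma head_ins t x : head [::] (rs_insert t x).1 = insrow (head [::] t) x.
Proof.
case: t => [|r t] //; rewrite insE /insrow.
by case: (bump_row r x) => [[y r']|].
Qed.

Lemma cs_nil r : cs r [::].
Proof. by move=> v. Qed.

Lemma pw_rcons r x : all (fun u => u <= x) r -> pairwise leq r -> pairwise leq (rcons r x).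
Proof. by move=> H1 H2; rewrite -cats1 pw_join. Qed.

Lemma tab_pw t : tabinv t -> pairwise leq (head [::] t).
Proof. by case: t => [|r t] //= []. Qed.

Lemma ins_tab t x : tabinv t -> tabinv (rs_insert t x).1.
Proof.
elim: t x => [|r t IH] x.
  by move=> _; split => //; apply: cs_nil.
move=> [rn pr csr tt]; rewrite insE.
have := bump_rowP r x; case E: (bump_row r x) => [[y r1]|] /=.
  move=> [a [b [Er Er1 Ha xy]]].
  have pr' := pr; rewrite Er in pr'; have [_ Hb pa pb] := pw_split pr'.
  split => //; first by rewrite Er1; case: (a).
    rewrite Er1; apply: pw_join => //; apply/allP=> u /(allP Hb); lia.
    rewrite head_ins; apply: cs_bump E => //; exact: tab_pw.
  exact: IH.
move=> Hr; split => //; first by case: (r).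
  exact: pw_rcons.
move=> v; apply: leq_trans (csr v) _; rewrite /clt -cats1 count_cat; exact: leq_addr.
Qed.

Lemma ins_count t x (p : pred nat) :
  count p (flatten (rs_insert t x).1) = p x + count p (flatten t).
Proof.
elim: t x => [|r t IH] x; first by rewrite /= ?cats0.
rewrite insE; have := bump_rowP r x; case: (bump_row r x) => [[y r1]|] /=.
  move=> [a [b [-> -> _ _]]]; rewrite !count_cat IH /=; lia.
by move=> _; rewrite -cats1 !count_cat /=; lia.
Qed.

Lemma ins_perm t x : perm_eq (flatten (rs_insert t x).1) (x :: flatten t).
Proof. by apply/permP => p; rewrite ins_count. Qed.

Lemma ins_shape t x : map size (rs_insert t x).1 = incr_nth (map size t) (rs_insert t x).2
   /\ (rs_insert t x).2 <= size t.
Proof.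
elim: t x => [|r t IH] x //.
rewrite insE; have := bump_rowP r x; case: (bump_row r x) => [[y r1]|] /=.
  move=> [a [b [-> -> _ _]]]; have [-> ?] := IH y; split => //.
  by rewrite !size_cat.
by move=> _; rewrite size_rcons.
Qed.

Lemma ins_inj t t' x x' : tabinv t -> tabinv t' -> rs_insert t x = rs_insert t' x' ->
  t = t' /\ x = x'.
Proof.
elim: t t' x x' => [|r t IH] [|r' t'] x x' //.
- by move=> _ _ [->].
- move=> _ [rn _ _ _]; rewrite insE; case: (bump_row r' x') => [[y r1]|] //= [].
  by case: (r') rn => [|u [|v w]] //= _ -> _.
- move=> [rn _ _ _] _; rewrite insE; case: (bump_row r x) => [[y r1]|] //= [].
  by case: (r) rn => [|u [|v w]] //= _ <- _.
move=> [rn pr _ tt] [rn' pr' _ tt']; rewrite !insE.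
case E: (bump_row r x) => [[y r1]|]; case E': (bump_row r' x') => [[y' r1']|] //=.
- move=> [e1 e2 e3]; have [et ey] := IH _ _ _ tt tt' (injective_projections _ _ e2 e3).
  subst; have := bump_unbump pr E; have := bump_unbump pr' E'.
  by move=> -> [-> ->].
- by move=> [/rcons_inj [-> ->] ->].
Qed.


Definition Rel (s s1 : seq nat) (z : nat) : Prop :=
  (s = rcons s1 z /\ all (fun u => u <= z) s1) \/
  exists c d z', [/\ s = c ++ z :: d, s1 = c ++ z' :: d, z < z',
                     all (fun u => u <= z) c & all (fun u => z' <= u) d].

Lemma rel_mem s s1 z : Rel s s1 z -> z \in s.
Proof.
case=> [[-> _]|[c [d [z' [-> _ _ _ _]]]]]; first by rewrite mem_rcons inE eqxx.
by rewrite mem_cat inE eqxx orbT.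
Qed.

Lemma cs_unbump r s s1 z : pairwise leq r -> pairwise leq s -> cs r s -> Rel s s1 z ->
  exists y r1, [/\ unbump r z = Some (y, r1), cs r1 s1 & Rel r r1 y].
Proof.
move=> pr ps H R.
have zs := rel_mem R.
have c1 : 0 < clt r z.
  apply: leq_trans (H z); rewrite /cle -has_count; apply/hasP; by exists z.
have := unbumpP r z; case E: (unbump r z) => [[y r1]|]; last first.
  move=> Hr; suff : clt r z = 0 by lia.
  by apply: count_none; allin Hr.
move=> [a [b [Er Er1 Hb yz]]]; exists y, r1; split => //; last first.
  rewrite Er in pr; have [Ha _ _ _] := pw_split pr.
  by right; exists a, b, z.
rewrite Er1; rewrite Er in H pr; have [Ha _ _ _] := pw_split pr.
have e2 : clt b z = 0 by apply: count_none; allin Hb.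
have e3 : clt a z <= size a by apply: count_size.
move=> v; have Hv := H v; have Hz := H z; move: Hv Hz; rewrite !cltE e2 yz ?ltnn.
case: R => [[Es Hs1]|[c [d [z' [Es Es1 zz Hc Hd]]]]].
  rewrite Es /cle -!cats1 !count_cat /= !addn0.
  have e4 : count (fun u => u <= z) s1 = size s1 by apply: count_all; allin Hs1.
  rewrite e4 leqnn.
  case: (ltnP y v) => yv; last first.
    try (have -> : (z < v) = false by lia). try (have -> : (z <= v) = false by lia). lia.
  case: (ltnP z v) => zv.
    try (have -> : (z <= v) by lia). lia.
  case: (ltnP v z) => vz.
    have f3 : clt a v = size a by apply: count_all; allin Ha.
    have f4 : count (fun u => u <= v) s1 <= size s1 by apply: count_size.
    try (have -> : (z <= v) = false by lia). lia.
  have -> : v = z by lia. rewrite ?leqnn ?ltnn. lia.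
rewrite Es Es1 !cleE.
have e4 : cle c z = size c by apply: count_all; allin Hc.
have e5 : cle d z = 0 by apply: count_none; allin Hd.
rewrite e4 e5 leqnn.
case: (ltnP y v) => yv; last first.
  try (have -> : (z < v) = false by lia). try (have -> : (z <= v) = false by lia).
  try (have -> : (z' <= v) = false by lia). lia.
case: (leqP z' v) => zv.
  try (have -> : (z <= v) by lia). try (have -> : (z < v) by lia). lia.
case: (ltnP z v) => zv2.
  try (have -> : (z <= v) by lia). lia.
case: (ltnP v z) => vz.
  have f3 : clt a v = size a by apply: count_all; allin Ha.
  have f4 : cle c v <= size c by apply: count_size.
  have f5 : cle d v = 0 by apply: count_none; allin Hd.
  try (have -> : (z <= v) = false by lia). lia.
have -> : v = z by lia. rewrite ?leqnn ?ltnn ?e4 ?e5. lia.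
Qed.


Definition corner (t : seq (seq nat)) i :=
  i < size t /\ size (nth [::] t i.+1) < size (nth [::] t i).

Lemma add_box0 r t k : add_box (r :: t) 0 k = rcons r k :: t.
Proof. by []. Qed.
Lemma add_boxS r t i k : add_box (r :: t) i.+1 k = r :: add_box t i k.
Proof. by rewrite /add_box /= ltnS; case: ifP. Qed.
Lemma add_box_nil i k : add_box [::] i k = [:: [:: k]].
Proof. by []. Qed.

Lemma tab_nonnil t : tabinv t -> t = [::] \/ exists r t', t = r :: t' /\ r != [::].
Proof. by case: t => [|r t]; [left | move=> [? _ _ _]; right; exists r, t]. Qed.

Lemma tabhead_nil t : tabinv t -> head [::] t = [::] -> t = [::].
Proof. by case: t => [|r t] //= [/eqP]. Qed.

Lemma pw_rcons_inv r z : pairwise leq (rcons r z) -> all (fun u => u <= z) r /\ pairwise leq r.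
Proof.
rewrite -cats1 pairwise_cat => /and3P[H1 H2 _]; split => //.
by apply/allP => u ur; move/allrelP: H1 => /(_ u z ur); rewrite inE eqxx => ->.
Qed.

Lemma cs_belast r1 z s : all (fun u => u <= z) r1 -> size s <= size r1 ->
  cs (rcons r1 z) s -> cs r1 s.
Proof.
move=> Hr1 Hs csr v; have := csr v; rewrite /clt -cats1 count_cat /= addn0.
case: (ltnP z v) => zv; last by rewrite addn0.
have f : count (fun w => w < v) r1 = size r1 by apply: count_all; allin Hr1.
rewrite f => _; apply: leq_trans (count_size _ _) _; lia.
Qed.

Lemma rev_step P i : tabinv P -> corner P i ->
  exists P1 x, [/\ tabinv P1, rs_insert P1 x = (P, i) & Rel (head [::] P) (head [::] P1) x].
Proof.
elim: P i => [|r t IH] i; first by move=> _ [].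
move=> [rn pr csr tt]; case: i => [|i] [Hi Hc] /=.
  clear Hi; case/lastP: r rn pr csr Hc => [|r1 z] // _ pr csr Hc.
  have [Hr1 pr1] := pw_rcons_inv pr.
  case: r1 Hr1 pr1 pr csr Hc => [|u r1] Hr1 pr1 pr csr Hc.
    have ht : head [::] t = [::] by case: (t) Hc => [|s t'] //=; case: s.
    rewrite (tabhead_nil tt ht); exists [::], z; split => //; by left.
  exists ((u :: r1) :: t), z; split => //.
  - split => //; apply: cs_belast csr => //.
    move: Hc; rewrite /= size_rcons; case: (t) => [|s t'] /=; lia.
  - by rewrite insE bump_None.
  - by left.
have [P1 [x [t1 ins R]]] := IH i tt (conj Hi Hc).
have [y [r1 [U cs1 R2]]] := cs_unbump pr (tab_pw tt) csr R.
exists (r1 :: P1), y; split => //.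
  have := unbumpP r x; rewrite U => -[a [b [Er Er1 Hb yx]]].
  rewrite Er in pr; have [Ha _ pa pb] := pw_split pr.
  split => //; first by rewrite Er1; case: (a).
  rewrite Er1; apply: pw_join => //; apply/allP => u /(allP Ha); lia.
by rewrite insE (unbump_bump pr U) ins.
Qed.


Lemma remlast t i : tabinv t -> corner t i -> exists t1 z,
  [/\ t = add_box t1 i z, tabinv t1, i <= size t1, nth [::] t i = rcons (nth [::] t1 i) z
    & forall v, cle (head [::] t1) v <= cle (head [::] t) v].
Proof.
elim: t i => [|r t IH] i; first by move=> _ [].
move=> [rn pr csr tt]; case: i => [|i] [Hi Hc] /=.
  clear Hi; case/lastP: r rn pr csr Hc => [|r1 z] // _ pr csr Hc.
  have [Hr1 pr1] := pw_rcons_inv pr.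
  case: r1 Hr1 pr1 pr csr Hc => [|u r1] Hr1 pr1 pr csr Hc.
    have ht : head [::] t = [::] by case: (t) Hc => [|s t'] //=; case: s.
    rewrite (tabhead_nil tt ht); exists [::], z; split => //.
  exists ((u :: r1) :: t), z; split => //.
  - split => //; apply: cs_belast csr => //.
    move: Hc; rewrite /= size_rcons; case: (t) => [|s t'] /=; lia.
  - by move=> v; rewrite /cle -cats1 count_cat leq_addr.
have [t1 [z [Et tt1 Hs Hn Hh]]] := IH i tt (conj Hi Hc).
exists (r :: t1), z; split => //=.
- by rewrite Et add_boxS.
- by split => // v; apply: leq_trans (Hh v) (csr v).
Qed.

Lemma tab_cs t i : tabinv t -> cs (nth [::] t i) (nth [::] t i.+1).
Proof.
elim: t i => [|r t IH] i /=; first by move=> _ v; rewrite nth_nil.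
move=> [_ _ csr tt]; case: i => [|i] /=; last exact: IH.
by case: (t) csr.
Qed.

Lemma add_box_count t i k (p : pred nat) :
  count p (flatten (add_box t i k)) = p k + count p (flatten t).
Proof.
elim: t i => [|r t IH] [|i]; rewrite ?add_box0 ?add_boxS /= -?cats1 ?count_cat ?IH /=; lia.
Qed.

Lemma add_box_shape t i k : i <= size t ->
  map size (add_box t i k) = incr_nth (map size t) i.
Proof.
elim: t i => [|r t IH] [|i] //=; rewrite ?add_box0 ?add_boxS /=.
- by rewrite size_rcons.
- by move=> H; rewrite IH.
Qed.

Lemma tab_pw_nth i t : tabinv t -> pairwise leq (nth [::] t i).
Proof.
elim: t i => [|r t IH] i /=; first by rewrite nth_nil.
by move=> [_ pr _ tt]; case: i => [|i] //=; apply: IH.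
Qed.

Definition Tinv T n := tabinv T /\ perm_eq (flatten T) (iota 1 n).

Lemma Tdec T n : Tinv T n.+1 -> exists i T',
  [/\ T = add_box T' i n.+1, i <= size T', Tinv T' n & corner T i].
Proof.
move=> [tT pT].
have Nin : n.+1 \in flatten T by rewrite (perm_mem pT) mem_iota; lia.
have Nmax : forall e, e \in flatten T -> e <= n.+1.
  by move=> e; rewrite (perm_mem pT) mem_iota; lia.
have /flattenP [r rT Nr] := Nin.
set i := index r T.
have Hi : i < size T by rewrite index_mem.
have Hr : nth [::] T i = r by rewrite nth_index.
have Hc : corner T i.
  split => //; have := tab_cs i tT; rewrite Hr => /(_ n.+1).
  have -> : cle (nth [::] T i.+1) n.+1 = size (nth [::] T i.+1).
    apply: count_all => u hu; apply: Nmax; apply/flattenP.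
    exists (nth [::] T i.+1) => //; apply: mem_nth.
    by case: ltnP hu => // H; rewrite nth_default.
  move=> H; apply: leq_ltn_trans H _.
  rewrite /clt -(count_predC (fun u => u < n.+1) r) -[X in X < _]addn0 ltn_add2l.
  rewrite -has_count; apply/hasP; exists n.+1 => //=; by rewrite ltnn.
have [T1 [z [ET tT1 Hs Hn _]]] := remlast tT Hc.
have ez : z = n.+1.
  have zin : z \in flatten T by apply/flattenP; exists r => //; rewrite -Hr Hn mem_rcons inE eqxx.
  have := Nmax _ zin.
  have := tab_pw_nth i tT; rewrite Hr => pr.
  have := Nr; rewrite -Hr Hn in pr *; have [Ha _] := pw_rcons_inv pr.
  rewrite mem_rcons inE => /orP[/eqP -> //|/(allP Ha)]; lia.
subst z; exists i, T1; split => //; split => //.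
apply/permP => p; have := permP pT p; rewrite ET add_box_count.
rewrite -addn1 iotaD count_cat /= addn0 add1n addnC addn1 => H; apply/eqP; by rewrite -(eqn_add2r (p n.+1)) H addnC.
Qed.

Lemma rsk_aux_rcons P Q k w x : rsk_aux P Q k (rcons w x) =
  ((rs_insert (rsk_aux P Q k w).1 x).1,
   add_box (rsk_aux P Q k w).2 (rs_insert (rsk_aux P Q k w).1 x).2 (k + size w)).
Proof.
elim: w P Q k => [|y w IH] P Q k /=; first by rewrite addn0; case: rs_insert.
by case: (rs_insert P y) => P' i; rewrite IH addSnnS.
Qed.

Definition PQ w := rsk_aux [::] [::] 1 w.

Lemma PQ_rcons w x : PQ (rcons w x) =
  ((rs_insert (PQ w).1 x).1, add_box (PQ w).2 (rs_insert (PQ w).1 x).2 (size w).+1).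
Proof. by rewrite /PQ rsk_aux_rcons. Qed.

Lemma add_box_nonnil Q i k : all (fun r => r != [::]) Q -> all (fun r => r != [::]) (add_box Q i k).
Proof.
elim: Q i => [|r Q IH] [|i] //=; rewrite ?add_box0 ?add_boxS /=.
- by case/andP=> _ ->; case: (r).
- by case/andP=> -> /IH ->.
Qed.

Lemma PQ_inv w : [/\ tabinv (PQ w).1, map size (PQ w).1 = map size (PQ w).2,
  all (fun r => r != [::]) (PQ w).2, all (fun e => e <= size w) (flatten (PQ w).2)
  & forall p, count p (flatten (PQ w).1) = count p w].
Proof.
elim/last_ind: w => [|w x [H1 H2 H3 H4 H5]]; first by split.
rewrite PQ_rcons /=; have [Hs Hi] := ins_shape (PQ w).1 x.
split.
- exact: ins_tab.
- by rewrite Hs add_box_shape -?H2 // -(size_map size) -H2 size_map.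
- exact: add_box_nonnil.
- apply/allP => e; rewrite size_rcons.
  have := add_box_count (PQ w).2 (rs_insert (PQ w).1 x).2 (size w).+1 (fun u => u == e).
  move=> Hc ein; have : 0 < count (fun u => u == e) (flatten (add_box (PQ w).2 (rs_insert (PQ w).1 x).2 (size w).+1)).
    by rewrite -has_count; apply/hasP; exists e.
  rewrite Hc /=; case: eqP => [-> //|_] /=.
  rewrite -has_count => /hasP [u /(allP H4) uw /eqP <-]; lia.
- by move=> p; rewrite ins_count H5 -cats1 count_cat /= addn0 addnC.
Qed.

Lemma add_box_inj Q Q' i i' k : all (fun r => r != [::]) Q -> all (fun r => r != [::]) Q' ->
  k \notin flatten Q -> k \notin flatten Q' -> i <= size Q -> i' <= size Q' ->
  add_box Q i k = add_box Q' i' k -> Q = Q' /\ i = i'.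
Proof.
elim: Q Q' i i' => [|r Q IH] [|r' Q'] [|i] [|i'] //=; rewrite ?add_box0 ?add_boxS ?add_box_nil.
- move=> _ /andP[rn _] _ _ _ _ [] e _; move/(congr1 size): e; rewrite size_rcons.
  by case: (r') rn.
- by move=> _ _ _ kn _ _ [e _]; move: kn; rewrite -e inE eqxx.
- move=> /andP[rn _] _ _ _ _ _ [] e _; move/(congr1 size): e; rewrite size_rcons.
  by case: (r) rn.
- by move=> _ _ kn _ _ _ [e _]; move: kn; rewrite e inE eqxx.
- by move=> _ _ _ _ _ _ [e1 e2]; case: (rcons_inj e1) => ->; rewrite e2.
- by move=> _ _ _ kn _ _ [e _]; move: kn; rewrite -e mem_cat mem_rcons inE eqxx.
- by move=> _ _ kn _ _ _ [e _]; move: kn; rewrite e mem_cat mem_rcons inE eqxx.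
- move=> /andP[_ Hq] /andP[_ Hq'].
  rewrite !mem_cat !negb_or => /andP[_ k1] /andP[_ k2] l1 l2 [-> e].
  by have [-> ->] := IH _ _ _ Hq Hq' k1 k2 l1 l2 e.
Qed.

Lemma PQ_inj w1 w2 : size w1 = size w2 -> PQ w1 = PQ w2 -> w1 = w2.
Proof.
elim/last_ind: w1 w2 => [|u1 x1 IH] w2.
  by case: w2.
case/lastP: w2 => [|u2 x2]; first by rewrite size_rcons.
rewrite !size_rcons => [[sz]]; rewrite !PQ_rcons => -[eP eQ].
have [A1 B1 C1 D1 _] := PQ_inv u1; have [A2 B2 C2 D2 _] := PQ_inv u2.
have [_ l1] := ins_shape (PQ u1).1 x1; have [_ l2] := ins_shape (PQ u2).1 x2.
rewrite -sz in eQ.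
have nin : forall w, all (fun e => e <= size w) (flatten (PQ w).2) ->
   (size w).+1 \notin flatten (PQ w).2.
  by move=> w H; apply/negP => /(allP H); rewrite ltnn.
have n2 : (size u1).+1 \notin flatten (PQ u2).2 by rewrite sz; apply: nin.
have s1 : (rs_insert (PQ u1).1 x1).2 <= size (PQ u1).2 by rewrite -(size_map size) -B1 size_map.
have s2 : (rs_insert (PQ u2).1 x2).2 <= size (PQ u2).2 by rewrite -(size_map size) -B2 size_map.
have [eQ2 ei] := add_box_inj C1 C2 (nin _ D1) n2 s1 s2 eQ.
have eins : rs_insert (PQ u1).1 x1 = rs_insert (PQ u2).1 x2.
  by move: eP ei; case: (rs_insert _ x1) => ? ?; case: (rs_insert _ x2) => ? ? /= -> ->.
have [eP2 ->] := ins_inj A1 A2 eins.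
have : PQ u1 = PQ u2 by move: eP2 eQ2; case: (PQ u1) => ? ?; case: (PQ u2) => ? ? /= -> ->.
by move=> /(IH _ sz) ->.
Qed.

Lemma corner_shape t t' i : map size t = map size t' -> corner t i -> corner t' i.
Proof.
move=> e [H1 H2]; have es : size t = size t' by rewrite -(size_map size) e size_map.
have f : forall j, size (nth [::] t j) = size (nth [::] t' j).
  move=> j; case: (ltnP j (size t)) => hj.
    by rewrite -!(nth_map [::] 0 size) -?es // e.
  by rewrite !nth_default // -es.
by split; rewrite -?es -?f.
Qed.

Lemma incr_nth_inj s s' i : all (fun k => 0 < k) s -> all (fun k => 0 < k) s' ->
  incr_nth s i = incr_nth s' i -> s = s'.
Proof.
elim: s s' i => [|a s IH] [|a' s'] [|i] //=.
- by move=> _ /andP[+ _] [e _]; rewrite -e.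
- by move=> _ /andP[+ _] [e _]; rewrite -e.
- by move=> /andP[+ _] _ [e _]; rewrite e.
- by move=> /andP[+ _] _ [e _]; rewrite e.
- by move=> _ _ [-> ->].
- by move=> /andP[_ H] /andP[_ H'] [-> /(IH _ _ H H') ->].
Qed.

Lemma tab_pos t : tabinv t -> all (fun k => 0 < k) (map size t).
Proof. by elim: t => [|r t IH] //= [rn _ _ /IH ->]; rewrite andbT lt0n size_eq0. Qed.

Lemma PQ_surj n : forall T P, Tinv T n -> tabinv P -> map size P = map size T ->
  exists w, size w = n /\ PQ w = (P, T).
Proof.
elim: n => [|n IH] T P.
  move=> [tT pT] tP sh; have eT : T = [::].
    case: T tT pT {sh} => [|r T] // [rn _ _ _].
    by move/perm_size; rewrite /= size_cat; case: (r) rn.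
  subst T; case: P tP sh => // _ _; by exists [::].
move=> tinv tP sh.
have [i [T' [ET Hs tinv' Hc]]] := Tdec tinv.
have Hc' : corner P i by apply: corner_shape Hc; rewrite sh.
have [P1 [x [tP1 ins _]]] := rev_step tP Hc'.
have [sh1 _] := ins_shape P1 x; rewrite ins /= in sh1.
have sh2 : map size P1 = map size T'.
  apply: (@incr_nth_inj _ _ i).
  - exact: tab_pos.
  - by apply: tab_pos; case: tinv'.
  - by rewrite -sh1 sh ET add_box_shape.
have [w1 [sw1 e1]] := IH _ _ tinv' tP1 sh2.
exists (rcons w1 x); split; first by rewrite size_rcons sw1.
by rewrite PQ_rcons e1 /= ins /= sw1 ET.
Qed.

Section Sim.
Variable g : nat -> nat.
Hypothesis mono : forall u v, u <= v -> g u <= g v.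

Definition Good x (S : seq nat) := forall z, z \in S -> g z = g x -> z < x.

Fixpoint Inv (t : seq (seq nat)) : Prop :=
  if t is r :: t' then (forall y, y \in r -> Good y (flatten t')) /\ Inv t' else True.

Lemma bump_sim x R : Good x R ->
  bump_row (map g R) (g x) = omap (fun p => (g p.1, map g p.2)) (bump_row R x).
Proof.
elim: R => [|y R IH] //= Gd.
have GR : Good x R by move=> z zR; apply: Gd; rewrite inE zR orbT.
case: (ltnP x y) => xy.
  have -> : g x < g y.
    have := mono (ltnW xy); rewrite leq_eqVlt => /orP[/eqP e|] //.
    by have := Gd y (mem_head _ _) (esym e); lia.
  by [].
have -> : (g x < g y) = false by have := mono xy; lia.
by rewrite IH //; case: (bump_row R x) => [[? ?]|].
Qed.

Lemma ins_sim t x : tabinv t -> Inv t -> uniq (flatten t) -> Good x (flatten t) ->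
  rs_insert (map (map g) t) (g x) = (map (map g) (rs_insert t x).1, (rs_insert t x).2)
  /\ Inv (rs_insert t x).1.
Proof.
elim: t x => [|r t IH] x.
  by move=> _ _ _ _; split => //=; split => // y _ z.
move=> [rn pr _ tt] [Ir It] U Gd.
have : uniq (r ++ flatten t) := U; rewrite cat_uniq => /and3P[ur _ ut].
have Gr : Good x r by move=> z zr; apply: Gd; rewrite /= mem_cat zr.
have Gt : Good x (flatten t) by move=> z zt; apply: Gd; rewrite /= mem_cat zt orbT.
rewrite map_cons !insE bump_sim //.
have := bump_rowP r x; case E: (bump_row r x) => [[y r1]|] /=; last first.
  move=> _; rewrite map_rcons; split => //; split => // e.
  by rewrite mem_rcons inE => /orP[/eqP ->|/Ir].
move=> [a [b [Er Er1 Ha xy]]].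
have yr : y \in r by rewrite Er mem_cat mem_head orbT.
have [IH1 IH2] := IH y tt It ut (Ir y yr).
split; first by rewrite IH1.
split => // e; rewrite Er1 => ein z.
rewrite (perm_mem (ins_perm t y)) inE => /orP[/eqP ->|zt].
  have gxy : g x < g y.
    have := mono (ltnW xy); rewrite leq_eqVlt => /orP[/eqP e0|] //.
    by have := Gr y yr (esym e0); lia.
  move: ein; rewrite mem_cat inE => /or3P[ea|/eqP ->|eb].
  - by have := mono (allP Ha e ea); lia.
  - lia.
  - move: pr ur; rewrite Er => pr ur; have [_ Hb _ _] := pw_split pr.
    have := allP Hb e eb; rewrite leq_eqVlt => /orP[/eqP ey|//].
    have yb : y \notin b by move: ur; rewrite cat_uniq => /and3P[_ _ /andP[]].
    by move: yb; rewrite ey eb.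
move: ein; rewrite mem_cat inE => /or3P[ea|/eqP ->|eb].
- by apply: (Ir e); rewrite ?Er ?mem_cat ?ea.
- exact: Gt.
- by apply: (Ir e); rewrite ?Er ?mem_cat ?inE ?eb ?orbT.
Qed.

End Sim.

Section Shuffle.
Variable mu : seq nat.
Variable w : seq nat.
Hypothesis wlt : all (fun a => a < size mu) w.
Hypothesis wcont : forall a, count_mem a w = nth 0 mu a.

Let S a := sumn (take a mu).
Definition gmu (v : nat) := count (fun k => sumn (take k.+1 mu) < v) (iota 0 (size mu)).
Let pi := shuffle_perm mu w.

Lemma S_mono i j : i <= j -> S i <= S j.
Proof.
move=> ij; rewrite /S -(take_takel mu ij) -{2}(cat_take_drop i (take j mu)) sumn_cat.
exact: leq_addr.
Qed.

Lemma S_succ a : a < size mu -> S a.+1 = S a + nth 0 mu a.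
Proof. by move=> H; rewrite /S (take_nth 0 H) sumn_rcons. Qed.

Lemma gmu_mono u v : u <= v -> gmu u <= gmu v.
Proof.
move=> uv; rewrite /gmu; apply: sub_count => k /=; lia.
Qed.

Lemma count_take_mono (p : pred nat) i j s : i <= j -> count p (take i s) <= count p (take j s).
Proof.
move=> ij; rewrite -(take_takel s ij) -{2}(cat_take_drop i (take j s)) count_cat.
exact: leq_addr.
Qed.

Lemma size_pi : size pi = size w.
Proof. by rewrite size_mkseq. Qed.

Lemma nth_pi p : p < size w ->
  nth 0 pi p = S (nth 0 w p) + count_mem (nth 0 w p) (take p w) + 1.
Proof. by move=> H; rewrite nth_mkseq. Qed.

Lemma count_lt p : p < size w -> count_mem (nth 0 w p) (take p w) < nth 0 mu (nth 0 w p).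
Proof.
move=> H; rewrite -wcont; have E := cat_take_drop p w.
rewrite -[X in _ < count _ X]E count_cat (drop_nth 0 H) /= eqxx.
lia.
Qed.

Lemma g_pi p : p < size w -> gmu (nth 0 pi p) = nth 0 w p.
Proof.
move=> H; rewrite nth_pi //; set a := nth 0 w p.
have am : a < size mu by apply: (allP wlt); apply: mem_nth.
have cl := count_lt H; rewrite -/a in cl.
have -> : gmu (S a + count_mem a (take p w) + 1) = count (fun k => k < a) (iota 0 (size mu)).
  apply: eq_in_count => k; rewrite mem_iota add0n => km.
  case: (ltnP k a) => ka.
    have := S_mono ka; rewrite /S; lia.
  have := @S_mono a.+1 k.+1 ka; have := S_succ am; rewrite /S; lia.
rewrite -(subnKC (ltnW am)) iotaD count_cat.
rewrite (@count_all (fun k => k < a)); last by move=> u; rewrite mem_iota; lia.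
rewrite (@count_none (fun k => k < a)); last by move=> u; rewrite mem_iota; lia.
by rewrite size_iota addn0.
Qed.

Lemma pi_order q p : q < p -> p < size w -> nth 0 w q = nth 0 w p -> nth 0 pi q < nth 0 pi p.
Proof.
move=> qp pw e; have qw : q < size w by lia.
rewrite (nth_pi qw) (nth_pi pw) e.
have := @count_take_mono (pred1 (nth 0 w p)) q.+1 p w qp.
rewrite (take_nth 0 qw) -cats1 count_cat /= e eqxx; lia.
Qed.

Lemma pi_uniq : uniq pi.
Proof.
apply/mkseq_uniqP => q p; rewrite !inE /= => qw pw e.
have e0 : nth 0 pi q = nth 0 pi p by rewrite /pi /shuffle_perm !nth_mkseq.
have e' : nth 0 w q = nth 0 w p by rewrite -g_pi // -(g_pi pw) e0.
case: (ltngtP q p) => // H.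
  by have := pi_order H pw e'; rewrite e0 ltnn.
by have := pi_order H qw (esym e'); rewrite e0 ltnn.
Qed.

Lemma sim_prefix k : k <= size w ->
  PQ (take k w) = (map (map gmu) (PQ (take k pi)).1, (PQ (take k pi)).2)
  /\ Inv gmu (PQ (take k pi)).1.
Proof.
elim: k => [|k IH] kw; first by rewrite !take0.
have kw' : k < size w by [].
have [e1 inv1] := IH (ltnW kw).
have kp : k < size pi by rewrite size_pi.
rewrite (take_nth 0 kw') (take_nth 0 kp) !PQ_rcons e1 /=.
rewrite -(g_pi kw').
have [T1 _ _ _ C1] := PQ_inv (take k pi).
have upi : uniq (flatten (PQ (take k pi)).1).
  rewrite (perm_uniq (_ : perm_eq _ (take k pi))); first exact: take_uniq pi_uniq.
  by apply/permP => p; rewrite C1.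
have Gd : Good gmu (nth 0 pi k) (flatten (PQ (take k pi)).1).
  move=> z; rewrite (perm_mem (_ : perm_eq _ (take k pi))); last by apply/permP => p; rewrite C1.
  move/(nthP 0) => [q]; rewrite size_take size_pi kw' => qk <-.
  rewrite nth_take // !g_pi ?(ltn_trans qk) // => e; apply: pi_order => //.
have [s1 s2] := ins_sim gmu_mono T1 inv1 upi Gd.
rewrite s1 !size_take size_pi kw'; split => //.
Qed.

Lemma RSKQ_shuffle : RSK_Q (shuffle_perm mu w) = (PQ w).2.
Proof.
have [e _] := sim_prefix (leqnn (size w)).
rewrite take_size in e; rewrite e /RSK_Q -/pi -size_pi take_size.
by [].
Qed.

End Shuffle.

Lemma sum_cnt (T : eqType) (U s : seq T) : uniq U -> {subset s <= U} ->
  \sum_(y <- U) count_mem y s = size s.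
Proof.
move=> uU; elim: s => [|x s IH] sub /=.
  by rewrite big1_seq.
have xU : x \in U by apply: sub; rewrite mem_head.
rewrite big_split /= IH; last by move=> y ys; apply: sub; rewrite inE ys orbT.
rewrite (bigD1_seq x) //= eqxx big1 ?addn0 ?add1n // => y; rewrite eq_sym => /negbTE ->.
by [].
Qed.

Lemma perms_count (T : eqType) (U : seq T) n : forall s : seq T, size s = n ->
  uniq U -> {subset s <= U} ->
  size (permutations s) * \prod_(y <- U) (count_mem y s)`! = n`!.
Proof.
elim: n => [|n IH] s.
  by move/size0nil => -> uU _; rewrite big1_seq.
move=> ss uU sub.
have sn : 0 < size s by rewrite ss.
rewrite (perm_size (permutationsE sn)) size_allpairs_dep.
rewrite sumnE big_map big_distrl /=.
rewrite (eq_big_seq (fun x => count_mem x s * n`!)); last first.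
  move=> x; rewrite mem_undup => xs.
  have xU : x \in U by apply: sub.
  have srem : size (rem x s) = n by rewrite size_rem // ss.
  have subr : {subset rem x s <= U} by move=> y /mem_rem /sub.
  rewrite -(IH _ srem uU subr) mulnCA; congr (_ * _).
  rewrite !(bigD1_seq x) //= mulnA; congr (_ * _).
    have c0 : 0 < count_mem x s by rewrite -has_count; apply/hasP; exists x => //=.
    rewrite count_mem_rem eqxx.
    by case: (count_mem x s) c0 => [|c] // _; rewrite subn1 factS.
  apply: eq_bigr => y yx; rewrite count_mem_rem eq_sym (negbTE yx) subn0 //.
rewrite -big_distrl /= sum_cnt ?undup_uniq //; last by move=> y; rewrite mem_undup.
by rewrite ss factS.
Qed.

Lemma card_perm_tuples (T : finType) n (s0 : seq T) : size s0 = n ->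
  #|[set w : n.-tuple T | perm_eq w s0]| = size (permutations s0).
Proof.
move=> ss; set L := pmap insub (permutations s0) : seq (n.-tuple T).
have -> : #|[set w : n.-tuple T | perm_eq w s0]| = #|L|.
  by apply: eq_card => w; rewrite inE mem_pmap_sub mem_permutations.
have uL : uniq L by apply: pmap_sub_uniq; apply: permutations_uniq.
have cL : #|L| = size L by apply/card_uniqP.
rewrite cL size_pmap_sub.
apply/eqP; rewrite -all_count; apply/allP => t; rewrite mem_permutations => /perm_size ->.
by rewrite ss.
Qed.

Lemma prod_enum (mu : seq nat) (F : nat -> nat) :
  \prod_(y <- enum 'I_(size mu)) F (nth 0 mu y) = \prod_(k <- mu) F k.
Proof.
rewrite (big_nth 0) big_mkord big_enum /=.
by [].
Qed.

Lemma sum_enum (mu : seq nat) (F : nat -> nat) :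
  \sum_(y <- enum 'I_(size mu)) F (nth 0 mu y) = \sum_(k <- mu) F k.
Proof.
rewrite (big_nth 0) big_mkord big_enum /=.
by [].
Qed.

Section Content.
Variable mu : seq nat.
Let m := size mu.
Definition s0 : seq 'I_m := flatten [seq @nseq 'I_m (nth 0 mu (val i)) i | i : 'I_m <- enum 'I_m].

Lemma count_s0 (j : 'I_m) : count_mem j s0 = nth 0 mu j.
Proof.
rewrite /s0 count_flatten -map_comp sumnE big_map.
rewrite (bigD1_seq j) ?mem_enum ?enum_uniq //= count_nseq /= eqxx mul1n.
rewrite big1 ?addn0 // => i ij; rewrite count_nseq /= ?(negbTE ij) 1?eq_sym ?(negbTE ij).
by [].
Qed.

Lemma size_s0 : size s0 = sumn mu.
Proof.
rewrite /s0 size_flatten /shape -map_comp sumnE big_map.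
rewrite (eq_bigr (fun i : 'I_m => nth 0 mu i)); last by move=> i _; rewrite /= size_nseq.
rewrite (sum_enum mu id) sumnE.
by [].
Qed.

Lemma content_perm (w : seq 'I_m) : [forall i : 'I_m, count_mem i w == nth 0 mu i] = perm_eq w s0.
Proof.
apply/forallP/idP => [H|H i].
  by apply/allP => x _; rewrite /= count_s0; apply: H.
by rewrite -count_s0; apply/eqP/permP.
Qed.

Lemma card_content :
  #|[set w : (sumn mu).-tuple 'I_m | has_content w]| * \prod_(k <- mu) k`! = (sumn mu)`!.
Proof.
have -> : #|[set w : (sumn mu).-tuple 'I_m | has_content w]| =
          #|[set w : (sumn mu).-tuple 'I_m | perm_eq w s0]|.
  by apply: eq_card => w; rewrite !inE /has_content content_perm.
rewrite card_perm_tuples ?size_s0 //.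
rewrite -(prod_enum mu factorial).
rewrite -(@perms_count _ (enum 'I_m) (sumn mu) s0 size_s0 (enum_uniq _)); last by move=> y; rewrite mem_enum.
congr (_ * _); apply: eq_bigr => i _; by rewrite count_s0.
Qed.
End Content.

Lemma pw_nth s i j : pairwise leq s -> i <= j -> j < size s -> nth 0 s i <= nth 0 s j.
Proof.
move=> /(pairwiseP 0) H ij js; rewrite leq_eqVlt in ij; case/orP: ij => [/eqP -> //|ij].
apply: H => //; rewrite inE /=; lia.
Qed.

Lemma cle_big s v j : pairwise leq s -> v < nth 0 s j -> cle s v <= j.
Proof.
move=> ps vj; case: (ltnP j (size s)) => js; last first.
  by apply: leq_trans (count_size _ _) js.
rewrite /cle -(cat_take_drop j s) count_cat.
rewrite (@count_none _ (drop j s)); last first.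
  move=> x /(nthP 0) [k]; rewrite size_drop nth_drop => ks <-.
  have ks' : k < size s - j := ks.
  have jk : j + k < size s by lia.
  rewrite -ltnNge; exact: leq_trans vj (@pw_nth s j (j + k) ps (leq_addr _ _) jk).
rewrite addn0; apply: leq_trans (count_size _ _) _; by rewrite size_take js.
Qed.

Lemma clt_big r v j : pairwise leq r -> v <= nth 0 r j -> clt r v <= j.
Proof.
move=> pr vj; case: (ltnP j (size r)) => js; last first.
  by apply: leq_trans (count_size _ _) js.
rewrite /clt -(cat_take_drop j r) count_cat.
rewrite (@count_none _ (drop j r)); last first.
  move=> x /(nthP 0) [k]; rewrite size_drop nth_drop => ks <-.
  have ks' : k < size r - j := ks.
  have jk : j + k < size r by lia.
  rewrite -leqNgt; exact: leq_trans vj (@pw_nth r j (j + k) pr (leq_addr _ _) jk).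
rewrite addn0; apply: leq_trans (count_size _ _) _; by rewrite size_take js.
Qed.

Lemma cle_nth s j : pairwise leq s -> j < size s -> j < cle s (nth 0 s j).
Proof.
move=> ps js; have E := cat_take_drop j.+1 s; rewrite /cle -[X in count _ X]E count_cat.
rewrite (@count_all _ (take j.+1 s)); last first.
  move=> x /(nthP 0) [k]; rewrite size_take.
  have js' : j < size s := js.
  have e : minn j.+1 (size s) = j.+1 by lia.
  rewrite /minn in e; rewrite e => ks; rewrite nth_take // => <-.
  apply: pw_nth => //; lia.
rewrite size_take; case: ifP => h; first lia. exact: leq_trans js (leq_addr _ _).
Qed.

Lemma pt_of_cs r s : pairwise leq r -> pairwise leq s -> cs r s ->
  size s <= size r /\ (forall j, j < size s -> nth 0 r j < nth 0 s j).
Proof.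
move=> pr ps H.
have key : forall j, j < size s -> j < size r /\ nth 0 r j < nth 0 s j.
  move=> j js; have := leq_trans (cle_nth ps js) (H _) => h.
  case: (ltnP j (size r)) => jr; last first.
    by have := leq_trans h (count_size _ _); lia.
  split => //; case: (ltnP (nth 0 r j) (nth 0 s j)) => // c.
  by have := clt_big pr c; lia.
split; last by move=> j /key [].
case: (ltnP (size r) (size s)) => // c.
by have [] := key _ c; rewrite ltnn.
Qed.

Lemma cs_of_pt r s : pairwise leq r -> pairwise leq s -> size s <= size r ->
  (forall j, j < size s -> nth 0 r j < nth 0 s j) -> cs r s.
Proof.
move=> pr ps sz H v; set k := cle s v.
have ks : k <= size s by apply: count_size.
apply: (@leq_trans (clt (take k r) v)); last first.
  by rewrite /clt -{2}(cat_take_drop k r) count_cat leq_addr.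
rewrite /clt (@count_all _ (take k r)); first by rewrite size_take; case: ifP => // _; exact: leq_trans ks sz.
move=> x /(nthP 0) [i]; rewrite size_take.
have e : minn k (size r) = k by have := ks; lia.
rewrite /minn in e; rewrite e => ik; rewrite nth_take // => <-.
have ik' : i < k := ik.
have isz : i < size s by lia.
have := H i isz; case: (ltnP v (nth 0 s i)) => c.
  by have := cle_big ps c; rewrite -/k; lia.
by move=> h; exact: leq_trans h c.
Qed.

Lemma tabinv_of t : all (fun r => r != [::]) t -> all (pairwise leq) t ->
  (forall i, cs (nth [::] t i) (nth [::] t i.+1)) -> tabinv t.
Proof.
elim: t => [|r t IH] //= /andP[rn an] /andP[pr ap] H; split => //.
  by have := H 0; case: (t).
by apply: IH => // i; apply: (H i.+1).
Qed.

Lemma cols_strictP t : cols_strict t <->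
  (forall i j, i < size t -> j < size (nth [::] t i.+1) ->
     nth 0 (nth [::] t i) j < nth 0 (nth [::] t i.+1) j).
Proof.
split.
  move=> /allP H i j it jt; have := H i; rewrite mem_iota leq0n add0n => /(_ it) /allP /(_ j).
  by rewrite mem_iota leq0n add0n; apply.
move=> H; apply/allP => i; rewrite mem_iota leq0n add0n => it.
by apply/allP => j; rewrite mem_iota leq0n add0n => jt; apply: H.
Qed.

Lemma tab_ssyt t : tabinv t -> is_ssyt t.
Proof.
move=> tt; apply/andP; split.
  apply/allP => r /(nthP [::]) [i it <-]; rewrite sorted_pairwise; last exact: leq_trans.
  exact: tab_pw_nth.
apply/cols_strictP => i j it jt.
have [_ H] := pt_of_cs (tab_pw_nth i tt) (tab_pw_nth i.+1 tt) (tab_cs i tt).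
exact: H.
Qed.

Lemma ssyt_tab t : all (fun r => r != [::]) t -> sorted geq (map size t) -> is_ssyt t -> tabinv t.
Proof.
move=> ne sg /andP[so cst]; have pw : all (pairwise leq) t.
  apply/allP => r rt; rewrite -sorted_pairwise; last exact: leq_trans.
  exact: (allP so).
apply: tabinv_of => // i.
have pwn : forall k, pairwise leq (nth [::] t k).
  move=> k; case: (ltnP k (size t)) => kt; last by rewrite nth_default.
  by apply: (allP pw); apply: mem_nth.
case: (ltnP i.+1 (size t)) => it; last by rewrite (nth_default _ it) => v.
apply: cs_of_pt => //.
  have := sg; rewrite sorted_pairwise; last by move=> a b c; rewrite /geq => h1 h2; apply: leq_trans h2 h1.
  have it' : i < size t := ltnW it.
  move/(pairwiseP 0) => /(_ i i.+1); rewrite !inE size_map !(nth_map [::]) //.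
  by move=> /(_ it' it (ltnSn i)).
move/cols_strictP: cst => H j jt; apply: H => //; exact: ltnW it.
Qed.

Lemma map_val_pmap m (s : seq nat) : all (fun a => a < m) s ->
  map val (pmap (insub : nat -> option 'I_m) s) = s.
Proof.
elim: s => [|x s IH] //= /andP[xm /IH H].
by rewrite (insubT (fun a => a < m) xm) /= H.
Qed.

Lemma cnt_val m (s : seq 'I_m) (i : 'I_m) : count_mem i s = count_mem (val i) (map val s).
Proof. by rewrite count_map; apply: eq_count => x. Qed.

Lemma all_lt_cnt m (s : seq nat) : all (fun a => a < m) s <-> count (fun a => a < m) s = size s.
Proof. by rewrite all_count; split => /eqP. Qed.

Section Main.
Variables (mu la : seq nat) (T : seq (seq nat)).
Let m := size mu.
Let N := sumn mu.
Hypothesis sla : sumn la = N.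
Hypothesis lapos : all (fun k => 0 < k) la.
Hypothesis lasort : sorted geq la.
Hypothesis shT : map size T = la.
Hypothesis pT : perm_eq (flatten T) (iota 1 N).
Hypothesis sT : all (sorted ltn) T.
Hypothesis cT : cols_strict T.

Definition fP (w : N.-tuple 'I_m) := (PQ (map val w)).1.
Definition f (w : N.-tuple 'I_m) : N.-tuple 'I_m := insubd w (pmap insub (flatten (fP w))).

Lemma fP_count w p : count p (flatten (fP w)) = count p (map val w).
Proof. by have [_ _ _ _ ->] := PQ_inv (map val w). Qed.

Lemma val_f w : map val (val (f w)) = flatten (fP w).
Proof.
have Hall : all (fun a => a < m) (flatten (fP w)).
  apply/all_lt_cnt; rewrite fP_count -!count_predT fP_count.
  rewrite !count_map; apply: eq_count => x /=; exact: ltn_ord.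
have Hs : size (pmap (insub : nat -> option 'I_m) (flatten (fP w))) == N.
  rewrite size_pmap_sub (all_lt_cnt _ _).1 // -count_predT fP_count count_predT size_map.
  by rewrite size_tuple.
by rewrite /f insubdK // map_val_pmap.
Qed.

Lemma content_of (w : N.-tuple 'I_m) : has_content w ->
  all (fun a => a < m) (map val w) /\ forall a, count_mem a (map val w) = nth 0 mu a.
Proof.
move=> /forallP H; split.
  by apply/allP => x /mapP [y _ ->]; exact: ltn_ord.
move=> a; case: (ltnP a m) => am.
  by have := eqP (H (Ordinal am)); rewrite cnt_val.
rewrite nth_default //; apply/count_memPn; apply/negP => /mapP [y _ ey].
by have := ltn_ord y; rewrite -ey; lia.
Qed.

Lemma Tinv_T : Tinv T N.
Proof.
split => //; apply: ssyt_tab.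
- apply/allP => r rT; have : size r \in la by rewrite -shT; apply: map_f.
  by move/(allP lapos); case: (r).
- by rewrite shT.
- apply/andP; split => //; apply/allP => r /(allP sT) s; apply: sub_sorted s.
  by move=> a b /ltnW.
Qed.

Definition setA := [set w : N.-tuple 'I_m | has_content w && (RSK_Q (shuffle_perm mu (map val w)) == T)].
Definition setK := [set w : N.-tuple 'I_m | has_content w && is_ssyt (reshape la (map val w))].

Lemma cardAK : #|setA| = #|setK|.
Proof.
have inA : forall w, w \in setA -> has_content w /\ (PQ (map val w)).2 = T.
  move=> w; rewrite inE => /andP[hc /eqP e]; split => //; rewrite -e.
  have [H1 H2] := content_of hc; by rewrite RSKQ_shuffle.
have finj : {in setA &, injective f}.
  move=> w1 w2 /inA [c1 q1] /inA [c2 q2] e.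
  have ef : flatten (fP w1) = flatten (fP w2) by rewrite -!val_f e.
  have [_ sh1 _ _ _] := PQ_inv (map val w1); have [_ sh2 _ _ _] := PQ_inv (map val w2).
  have eP : fP w1 = fP w2.
    by rewrite -(flattenK (fP w1)) -(flattenK (fP w2)) ef /shape /fP sh1 sh2 q1 q2.
  have : PQ (map val w1) = PQ (map val w2).
    by rewrite [PQ (map val w1)]surjective_pairing [PQ (map val w2)]surjective_pairing -/(fP w1) -/(fP w2) eP q1 q2.
  move/PQ_inj; rewrite !size_map !size_tuple => /(_ erefl) /(inj_map val_inj) ev.
  exact: val_inj.
have -> : setK = f @: setA.
  apply/setP => u; apply/idP/imsetP; last first.
    move=> [w wA ->]; have [c q] := inA w wA; rewrite inE; apply/andP; split.
      apply/forallP => i; rewrite cnt_val val_f fP_count -cnt_val; exact: (forallP c i).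
    rewrite val_f; have [t1 sh1 _ _ _] := PQ_inv (map val w).
    have -> : la = shape (fP w) by rewrite /shape /fP sh1 q shT.
    by rewrite flattenK; apply: tab_ssyt.
  rewrite inE => /andP[cu su].
  set P := reshape la (map val u).
  have szu : size (map val u) = sumn la by rewrite size_map size_tuple sla.
  have shP : map size P = la by apply: reshapeKl; rewrite szu.
  have flP : flatten P = map val u by apply: reshapeKr; rewrite szu.
  have tP : tabinv P.
    apply: ssyt_tab => //; last by rewrite shP.
    apply/allP => r rP; have : size r \in la by rewrite -shP; apply: map_f.
    by move/(allP lapos); case: (r).
  have shPT : map size P = map size T by rewrite shP shT.
  have [x [sx ex]] := PQ_surj Tinv_T tP shPT.
  have cx : forall p, count p x = count p (map val u).
    by move=> p; have [_ _ _ _ <-] := PQ_inv x; rewrite ex /= flP.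
  have [allu cntu] := content_of cu.
  have allx : all (fun a => a < m) x.
    by apply/all_lt_cnt; rewrite cx (all_lt_cnt _ _).1 // -count_predT -cx count_predT.
  have sxN : size (pmap (insub : nat -> option 'I_m) x) == N.
    by rewrite size_pmap_sub (all_lt_cnt _ _).1 // sx.
  set w := insubd u (pmap insub x) : N.-tuple 'I_m.
  have vw : map val w = x by rewrite /w insubdK // map_val_pmap.
  exists w.
    rewrite inE; apply/andP; split.
      apply/forallP => i; rewrite cnt_val vw cx -cnt_val; exact: (forallP cu i).
    rewrite vw RSKQ_shuffle ?ex //.
    by move=> a; rewrite cx cntu.
  apply: val_inj; apply: (inj_map val_inj); by rewrite val_f /fP vw ex /= flP.
by rewrite card_in_imset.
Qed.

End Main.

Import GRing.Theory Num.Theory.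
Theorem lemma7p4 (n : nat) (mu la : seq nat) (T : seq (seq nat)) :
  is_composition n mu -> is_partition n la -> is_syt la T ->
  shuffle_prob mu T = ((Kostka la mu)%:R / multinomial n mu)%R.
Proof.
move=> /andP[mupos /eqP smu] /andP[/andP[lasort lapos] /eqP sla] /and4P[/eqP shT pT sT cT].
have e : sumn la = sumn mu by rewrite sla smu.
rewrite e in pT.
have cAK := cardAK e lapos lasort shT pT sT cT.
rewrite /setA /setK in cAK.
rewrite /shuffle_prob /multinomial /Kostka e -cAK -smu.
rewrite -(card_content mu) natrM -natr_prod mulfK //.
rewrite pnatr_eq0 -lt0n; apply: prodn_gt0 => i; exact: fact_gt0.
Qed.
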